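(* For each $n\geq1$ the map $\tilde T_n$ is Markov. For $n=1$ a Markov partition is $\{(0,\kappa_1),(\kappa_1,\tfrac12),(\tfrac12,1-\kappa_1),(1-\kappa_1,1)\}$, and for $n\geq2$ a Markov partition consists of the intervals $(0,\kappa_n)$, $(\kappa_n,\tfrac12-\tfrac{\kappa_n}{2(1+\kappa_n)})$, $(\tfrac12-\tfrac{\kappa_n}{2(1+\kappa_n)},\tfrac12)$, $(\tfrac12,\tfrac12+\tfrac{\kappa_n}{2(1+\kappa_n)})$; $(\tilde T_n^{i+1}(\kappa_n),\tilde T_n^i(\kappa_n))$ for $1\le i\le n-2$; and $(\tilde T_n(\kappa_n),1)$. In all cases the Markov partition has $n+3$ intervals.
   Context: For $\kappa\in(0,1/2)$, the paired tent map $T_\kappa:[-1,1]\to[-1,1]$ is $T_\kappa(x)=2(1+\kappa)(x+1)-1$ for $x\in[-1,-1/2]$, $T_\kappa(x)=-2(1+\kappa)x-1$ for $x\in[-1/2,0)$, $T_\kappa(0)=0$, $T_\kappa(x)=-2(1+\kappa)x+1$ for $x\in(0,1/2]$, $T_\kappa(x)=2(1+\kappa)(x-1)+1$ for $x\in[1/2,1]$. For $n\geq1$, $\kappa_n$ is the unique solution in $(0,1/2)$ of $(2+2\kappa)^n\kappa=1$, and $\tilde T_n:[0,1]\to[0,1]$ is $\tilde T_n(x)=|T_{\kappa_n}(x)|$. A map $T$ of an interval $I$ is Markov if there is a finite collection $\{R_i\}_{i=1}^r$ of disjoint open intervals (a Markov partition) such that $I\setminus\bigcup_iR_i$ is exactly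 the set of endpoints of the $R_i$, and whenever $R_i\cap T(R_j)\neq\emptyset$, we have $R_i\subset T(R_j)$. *)

(* Defs.v *)
From Stdlib Require Import Reals Lra Lia List.
Import ListNotations.
Open Scope R_scope.

(* The paired tent map T_kappa on [-1,1] (values outside [-1,1] are irrelevant). *)
Definition T (k x : R) : R :=
  if Rle_dec x (-1/2) then 2*(1+k)*(x+1) - 1
  else if Rlt_dec x 0 then -2*(1+k)*x - 1
  else if Req_EM_T x 0 then 0
  else if Rle_dec x (1/2) then -2*(1+k)*x + 1
  else 2*(1+k)*(x-1) + 1.

Definition Ttilde (k x : R) : R := Rabs (T k x).

Fixpoint iterR (f : R -> R) (m : nat) (x : R) : R :=
  match m with O => x | S m' => f (iterR f m' x) end.

(* An open interval is represented by the pair of its endpoints (a,b), a < b. *)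
Definition in_open (p : R * R) (x : R) : Prop := fst p < x < snd p.

Definition markov_partition (a b : R) (f : R -> R) (P : list (R * R)) : Prop :=
  (forall p, In p P -> a <= fst p /\ fst p < snd p /\ snd p <= b) /\
  (forall i j, (i < length P)%nat -> (j < length P)%nat -> i <> j ->
     forall x, ~ (in_open (nth i P (0,0)) x /\ in_open (nth j P (0,0)) x)) /\
  (forall x, a <= x <= b ->
     ((~ exists p, In p P /\ in_open p x) <->
      (exists p, In p P /\ (x = fst p \/ x = snd p)))) /\
  (forall x, (exists p, In p P /\ (x = fst p \/ x = snd p)) -> a <= x <= b) /\
  (forall p q, In p P -> In q P ->
     (exists x, in_open p x /\ exists y, in_open q y /\ f y = x) ->
     forall x, in_open p x -> exists y, in_open q y /\ f y = x).

Definition is_markov (a b : R) (f : R -> R) : Prop :=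
  exists P, markov_partition a b f P.

Definition paper_partition (n : nat) (k : R) : list (R * R) :=
  let c := k / (2 * (1 + k)) in
  if Nat.eqb n 1 then
    [(0, k); (k, 1/2); (1/2, 1 - k); (1 - k, 1)]
  else
    [(0, k); (k, 1/2 - c); (1/2 - c, 1/2); (1/2, 1/2 + c)]
    ++ map (fun i => (iterR (Ttilde k) (i+1) k, iterR (Ttilde k) i k)) (seq 1 (n - 2))
    ++ [(Ttilde k k, 1)].

(* Main.v *)
Require Import Defs.
From Stdlib Require Import Reals List Lra Lia.
Import ListNotations.
Open Scope R_scope.

Definition isCut (P : list (R*R)) (c : R) : Prop :=
  forall q, In q P -> snd q <= c \/ c <= fst q.

Lemma markov_generic (f : R -> R) (P : list (R*R)) :
  NoDup P ->
  (forall p, In p P -> 0 <= fst p /\ fst p < snd p /\ snd p <= 1) ->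
  (forall p, In p P -> isCut P (fst p) /\ isCut P (snd p)) ->
  (forall x, 0 <= x <= 1 -> (exists p, In p P /\ in_open p x) \/
                            (exists p, In p P /\ (x = fst p \/ x = snd p))) ->
  (forall q, In q P -> exists a b, isCut P a /\ isCut P b /\
      (forall y, in_open q y -> a < f y < b) /\
      (forall x, a < x < b -> exists y, in_open q y /\ f y = x)) ->
  markov_partition 0 1 f P.
Proof.
  intros HND Hb Hc Hcov Himg.
  split; [exact Hb|].
  split.
  { intros i j Hi Hj Hij x [H1 H2].
    apply Hij.
    apply (proj1 (NoDup_nth P (0,0)) HND i j Hi Hj).
    pose proof (nth_In P (0,0) Hi) as Pi.
    pose proof (nth_In P (0,0) Hj) as Pj.
    destruct (Hc _ Pi) as [C1 C2]. destruct (Hc _ Pj) as [C3 C4].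
    destruct (nth i P (0,0)) as [a b] eqn:E1.
    destruct (nth j P (0,0)) as [c d] eqn:E2.
    unfold in_open in *; simpl in *.
    destruct (C1 _ Pj); destruct (C2 _ Pj); destruct (C3 _ Pi); destruct (C4 _ Pi);
      simpl in *; f_equal; lra. }
  split.
  { intros x Hx; split.
    - intros Hn. destruct (Hcov x Hx) as [H|H]; [contradiction|exact H].
    - intros [p [Hp He]] [q [Hq Hi]].
      destruct (Hc p Hp) as [C1 C2]. unfold in_open in Hi.
      destruct He as [He|He]; subst x.
      + destruct (C1 q Hq); lra.
      + destruct (C2 q Hq); lra. }
  split.
  { intros x [p [Hp He]]. destruct (Hb p Hp). destruct He; subst; lra. }
  intros p q Hp Hq [x [Hx [y [Hy Hfy]]]] x' Hx'.
  destruct (Himg q Hq) as [a [b [Ca [Cb [Hf Hs]]]]].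
  apply Hs.
  pose proof (Hf y Hy) as Hab. rewrite Hfy in Hab.
  unfold in_open in *.
  destruct (Ca p Hp); destruct (Cb p Hp); lra.
Qed.

Lemma Tt_left k y : 0 < y <= 1/2 -> Ttilde k y = Rabs (1 - 2*(1+k)*y).
Proof.
  intros H. unfold Ttilde, T.
  destruct (Rle_dec y (-1/2)); [lra|].
  destruct (Rlt_dec y 0); [lra|].
  destruct (Req_EM_T y 0); [lra|].
  destruct (Rle_dec y (1/2)); [f_equal; ring|lra].
Qed.

Lemma Tt_right k y : 1/2 < y -> Ttilde k y = Rabs (1 - 2*(1+k)*(1-y)).
Proof.
  intros H. unfold Ttilde, T.
  destruct (Rle_dec y (-1/2)); [lra|].
  destruct (Rlt_dec y 0); [lra|].
  destruct (Req_EM_T y 0); [lra|].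
  destruct (Rle_dec y (1/2)); [lra|f_equal; ring].
Qed.

Lemma Tt_left' k y : 0 < y <= 1/2 -> Ttilde k y = Rabs (1 - 2*(1+k)*y).
Proof. apply Tt_left. Qed.

Definition sK (k:R) := 2*(1+k).
Definition wK (k:R) (i:nat) := k * sK k ^ i.

Lemma wS k i : wK k (S i) = sK k * wK k i.
Proof. unfold wK; simpl; ring. Qed.
Lemma w0 k : wK k 0 = k.
Proof. unfold wK; simpl; ring. Qed.
Lemma s_gt2 k : 0 < k -> 2 < sK k.
Proof. unfold sK; lra. Qed.
Lemma w_pos k i : 0 < k -> 0 < wK k i.
Proof. intros. unfold wK. apply Rmult_lt_0_compat; auto. apply pow_lt. unfold sK; lra. Qed.
Lemma w_le k i j : 0 < k -> (i <= j)%nat -> wK k i <= wK k j.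
Proof. intros. unfold wK. apply Rmult_le_compat_l; [lra|]. apply Rle_pow; auto. unfold sK; lra. Qed.
Lemma w_lt k i j : 0 < k -> (i < j)%nat -> wK k i < wK k j.
Proof. intros. unfold wK. apply Rmult_lt_compat_l; [lra|]. apply Rlt_pow; auto. unfold sK; lra. Qed.
Lemma w_n n k : (2+2*k)^n*k = 1 -> wK k n = 1.
Proof. intros H. unfold wK, sK. replace (2*(1+k)) with (2+2*k) by ring. rewrite Rmult_comm. exact H. Qed.
Lemma w_n1 n k : (1 <= n)%nat -> (2+2*k)^n*k = 1 -> sK k * wK k (n-1) = 1.
Proof. intros Hn H. rewrite <- wS. replace (S (n-1)) with n by lia. apply (w_n n k H). Qed.

Lemma iter_closed n k : (1 <= n)%nat -> 0 < k < 1/2 -> (2+2*k)^n*k = 1 ->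
  forall i, (1 <= i <= n)%nat -> iterR (Ttilde k) i k = 1 - wK k i.
Proof.
  intros Hn Hk H. pose proof (w_n n k H) as Wn. pose proof (w_n1 n k Hn H) as Wn1.
  pose proof (s_gt2 k (proj1 Hk)) as S2.
  induction i as [|i IH]; intros Hi; [lia|].
  destruct i as [|i].
  - simpl. rewrite Tt_left by lra. rewrite Rabs_pos_eq.
    + rewrite wS, w0. unfold sK; ring.
    + pose proof (w_le k 1 n (proj1 Hk) ltac:(lia)). rewrite wS, w0 in H0. unfold sK in *. lra.
  - change (iterR (Ttilde k) (S (S i)) k) with (Ttilde k (iterR (Ttilde k) (S i) k)).
    rewrite IH by lia.
    pose proof (w_le k (S i) (n-1) (proj1 Hk) ltac:(lia)).
    pose proof (w_pos k (S i) (proj1 Hk)).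
    pose proof (w_le k (S (S i)) n (proj1 Hk) ltac:(lia)).
    rewrite wS in H2.
    assert (wK k (S i) < 1/2) by nra.
    rewrite Tt_right by lra. rewrite Rabs_pos_eq.
    + rewrite (wS k (S i)). unfold sK in *; ring.
    + unfold sK in *. lra.
Qed.

Lemma r_eq n k : (2 <= n)%nat -> 0 < k < 1/2 -> (2+2*k)^n*k = 1 ->
  1/2 - k / (2*(1+k)) = wK k (n-1) /\ 1/2 + k / (2*(1+k)) = 1 - wK k (n-1).
Proof.
  intros Hn Hk H. pose proof (w_n1 n k ltac:(lia) H) as W.
  assert (Hr: wK k (n-1) = / (2*(1+k))).
  { apply (Rmult_eq_reg_l (sK k)); [rewrite W; unfold sK; field; lra | unfold sK; lra]. }
  rewrite Hr. split; field; lra.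
Qed.

Lemma mem_P n k : (2 <= n)%nat -> 0 < k < 1/2 -> (2+2*k)^n*k = 1 ->
  forall p, In p (paper_partition n k) <->
  p = (0,k) \/ p = (k, wK k (n-1)) \/ p = (wK k (n-1), 1/2) \/ p = (1/2, 1 - wK k (n-1))
  \/ p = (1 - wK k 1, 1)
  \/ exists i, (1 <= i <= n-2)%nat /\ p = (1 - wK k (i+1), 1 - wK k i).
Proof.
  intros Hn Hk H p. destruct (r_eq n k Hn Hk H) as [E1 E2].
  unfold paper_partition. cbv zeta.
  replace (Nat.eqb n 1) with false by (symmetry; apply Nat.eqb_neq; lia).
  rewrite E1, E2.
  replace (Ttilde k k) with (1 - wK k 1)
    by (rewrite <- (iter_closed n k ltac:(lia) Hk H 1 ltac:(lia)); reflexivity).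
  rewrite !in_app_iff. simpl. rewrite in_map_iff.
  idtac.
  split.
  - intros [[HH|[HH|[HH|[HH|[]]]]]|[[i [Hi Hs]]|[HH|[]]]]; try (subst; tauto).
    rewrite in_seq in Hs. right; right; right; right; right. exists i. split; [lia|].
    rewrite <- Hi. rewrite !(iter_closed n k ltac:(lia) Hk H) by lia. reflexivity.
  - intros [HH|[HH|[HH|[HH|[HH|HH]]]]]; try (subst; tauto).
    destruct HH as [i [Hi Hp]].
    right; left. exists i. split.
    + rewrite !(iter_closed n k ltac:(lia) Hk H) by lia. auto.
    + rewrite in_seq. lia.
Qed.

Lemma locate k : 0 < k -> forall m, (1<=m)%nat -> forall y, wK k 1 <= y <= wK k m ->
  (exists i, (1<=i<=m)%nat /\ y = wK k i) \/
  (exists i, (1<=i<m)%nat /\ wK k i < y < wK k (i+1)).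
Proof.
  intros Hk m Hm. induction m as [|m IH]; [lia|].
  intros y Hy. destruct (Nat.eq_dec m 0) as [->|Hm0].
  - left. exists 1%nat. split; [lia|lra].
  - destruct (Rle_lt_dec y (wK k m)) as [Hl|Hl].
    + destruct (IH ltac:(lia) y ltac:(lra)) as [[i [Hi E]]|[i [Hi E]]].
      * left; exists i; split; [lia|auto].
      * right; exists i; split; [lia|auto].
    + destruct (Req_dec y (wK k (S m))) as [E|E].
      * left; exists (S m); split; [lia|auto].
      * right; exists m; split; [lia|]. replace (m+1)%nat with (S m) by lia. lra.
Qed.

Lemma nodup_P n k : (2 <= n)%nat -> 0 < k < 1/2 -> (2+2*k)^n*k = 1 ->
  NoDup (paper_partition n k).
Proof.
  intros Hn Hk H. destruct (r_eq n k Hn Hk H) as [E1 E2].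
  pose proof (w_n1 n k ltac:(lia) H) as Wn1.
  pose proof (s_gt2 k (proj1 Hk)) as S2.
  pose proof (w_pos k (n-1) (proj1 Hk)).
  assert (Hr: wK k (n-1) < 1/2) by nra.
  assert (Hkr: k < wK k (n-1)) by (pose proof (w_lt k 0 (n-1) (proj1 Hk) ltac:(lia)); rewrite w0 in *; lra).
  unfold paper_partition. cbv zeta.
  replace (Nat.eqb n 1) with false by (symmetry; apply Nat.eqb_neq; lia).
  rewrite E1, E2.
  replace (Ttilde k k) with (1 - wK k 1)
    by (rewrite <- (iter_closed n k ltac:(lia) Hk H 1 ltac:(lia)); reflexivity).
  apply NoDup_app.
  - repeat constructor; simpl; intros HH; repeat destruct HH as [HH|HH]; try exact HH;
      injection HH; intros; lra.
  - apply NoDup_app.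
    + apply NoDup_map_NoDup_ForallPairs; [|apply seq_NoDup].
      intros a b Ha Hb Hab. rewrite in_seq in Ha, Hb.
      injection Hab; intros Hs _.
      rewrite !(iter_closed n k ltac:(lia) Hk H) in Hs by lia.
      destruct (Nat.lt_total a b) as [L|[L|L]]; auto;
        [pose proof (w_lt k a b (proj1 Hk) L) | pose proof (w_lt k b a (proj1 Hk) L)]; lra.
    + repeat constructor; simpl; tauto.
    + intros a Ha Hb. rewrite in_map_iff in Ha. destruct Ha as [i [Hi Hs]].
      rewrite in_seq in Hs. destruct Hb as [Hb|[]]. subst a.
      injection Hb; intros E _.
      rewrite (iter_closed n k ltac:(lia) Hk H) in E by lia.
      pose proof (w_pos k i (proj1 Hk)); lra.
  - intros a Ha Hb. simpl in Ha. rewrite in_app_iff, in_map_iff in Hb.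
    assert (fst a < 1 - wK k (n-1)) by
      (repeat destruct Ha as [Ha|Ha]; subst; simpl; lra || contradiction).
    destruct Hb as [[i [Hi Hs]]|[Hb|[]]].
    + rewrite in_seq in Hs. subst a. simpl in H1.
      rewrite (iter_closed n k ltac:(lia) Hk H) in H1 by lia.
      pose proof (w_le k (i+1) (n-1) (proj1 Hk) ltac:(lia)). lra.
    + subst a. simpl in H1.
      pose proof (w_le k 1 (n-1) (proj1 Hk) ltac:(lia)). lra.
Qed.

Lemma cut_P n k : (2 <= n)%nat -> 0 < k < 1/2 -> (2+2*k)^n*k = 1 ->
  forall c, (c = 0 \/ c = k \/ c = wK k (n-1) \/ c = 1/2 \/ c = 1 \/
             exists m, (1 <= m <= n)%nat /\ c = 1 - wK k m) ->
  isCut (paper_partition n k) c.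
Proof.
  intros Hn Hk H c Hc q Hq.
  pose proof (w_n1 n k ltac:(lia) H) as Wn1.
  pose proof (w_n n k H) as Wn.
  pose proof (s_gt2 k (proj1 Hk)) as S2.
  pose proof (w_pos k (n-1) (proj1 Hk)).
  assert (Hr: wK k (n-1) < 1/2) by nra.
  assert (Hkr: k < wK k 1) by (pose proof (w_lt k 0 1 (proj1 Hk) ltac:(lia)); rewrite w0 in *; lra).
  pose proof (w_le k 1 (n-1) (proj1 Hk) ltac:(lia)) as W1r.
  rewrite (mem_P n k Hn Hk H) in Hq.
  destruct Hc as [Hc|[Hc|[Hc|[Hc|[Hc|[m [Hm Hc]]]]]]].
  - destruct Hq as [Hq|[Hq|[Hq|[Hq|[Hq|[i [Hi Hq]]]]]]]; subst; simpl; try lra.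
    pose proof (w_le k (i+1) (n-1) (proj1 Hk) ltac:(lia)). lra.
  - destruct Hq as [Hq|[Hq|[Hq|[Hq|[Hq|[i [Hi Hq]]]]]]]; subst; simpl; try lra.
    pose proof (w_le k (i+1) (n-1) (proj1 Hk) ltac:(lia)). lra.
  - destruct Hq as [Hq|[Hq|[Hq|[Hq|[Hq|[i [Hi Hq]]]]]]]; subst; simpl; try lra.
    pose proof (w_le k (i+1) (n-1) (proj1 Hk) ltac:(lia)). lra.
  - destruct Hq as [Hq|[Hq|[Hq|[Hq|[Hq|[i [Hi Hq]]]]]]]; subst; simpl; try lra.
    pose proof (w_le k (i+1) (n-1) (proj1 Hk) ltac:(lia)). lra.
  - destruct Hq as [Hq|[Hq|[Hq|[Hq|[Hq|[i [Hi Hq]]]]]]]; subst; simpl; try lra.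
    pose proof (w_pos k i (proj1 Hk)). lra.
  - assert (Hm1: wK k 1 <= wK k m) by (apply w_le; lia || lra).
    assert (Hmx: ((m <= n-1)%nat /\ wK k m <= wK k (n-1)) \/ wK k m = 1).
    { destruct (Nat.eq_dec m n) as [->|Hne]; [right; exact Wn|left; split; [lia|apply w_le; lia || lra]]. }
    destruct Hq as [Hq|[Hq|[Hq|[Hq|[Hq|[i [Hi Hq]]]]]]]; subst; simpl; try lra.
    assert ((wK k m <= wK k i) \/ (wK k (i+1) <= wK k m)).
    { destruct (Compare_dec.le_lt_dec m i); [left|right]; apply w_le; lia || lra. }
    lra.
Qed.

Lemma ends_cut n k : (2 <= n)%nat -> 0 < k < 1/2 -> (2+2*k)^n*k = 1 ->
  forall p, In p (paper_partition n k) ->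
  isCut (paper_partition n k) (fst p) /\ isCut (paper_partition n k) (snd p).
Proof.
  intros Hn Hk H p Hp. pose proof (cut_P n k Hn Hk H) as C.
  rewrite (mem_P n k Hn Hk H) in Hp.
  destruct Hp as [Hq|[Hq|[Hq|[Hq|[Hq|[i [Hi Hq]]]]]]]; subst; simpl; split; apply C; try tauto.
  - right; right; right; right; right. exists (n-1)%nat. split; [lia|auto].
  - right; right; right; right; right. exists 1%nat. split; [lia|auto].
  - right; right; right; right; right. exists (i+1)%nat. split; [lia|auto].
  - right; right; right; right; right. exists i. split; [lia|auto].
Qed.

Ltac facts n k Hn Hk H :=
  pose proof (w_n1 n k ltac:(lia) H) as Wn1;
  pose proof (w_n n k H) as Wn;
  pose proof (s_gt2 k (proj1 Hk)) as S2;
  pose proof (w_pos k (n-1) (proj1 Hk)) as Wp;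
  assert (Hr: wK k (n-1) < 1/2) by nra;
  assert (Hkr: k < wK k 1) by (pose proof (w_lt k 0 1 (proj1 Hk) ltac:(lia)); rewrite w0 in *; lra);
  pose proof (w_le k 1 (n-1) (proj1 Hk) ltac:(lia)) as W1r;
  assert (W1: wK k 1 = sK k * k) by (rewrite wS, w0; ring).

Lemma bounds_P n k : (2 <= n)%nat -> 0 < k < 1/2 -> (2+2*k)^n*k = 1 ->
  forall p, In p (paper_partition n k) -> 0 <= fst p /\ fst p < snd p /\ snd p <= 1.
Proof.
  intros Hn Hk H p Hp. facts n k Hn Hk H.
  rewrite (mem_P n k Hn Hk H) in Hp.
  destruct Hp as [Hq|[Hq|[Hq|[Hq|[Hq|[i [Hi Hq]]]]]]]; subst; simpl; try lra.
  pose proof (w_le k (i+1) (n-1) (proj1 Hk) ltac:(lia)).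
  pose proof (w_lt k i (i+1) (proj1 Hk) ltac:(lia)).
  pose proof (w_pos k i (proj1 Hk)). lra.
Qed.

Lemma cover_P n k : (2 <= n)%nat -> 0 < k < 1/2 -> (2+2*k)^n*k = 1 ->
  forall x, 0 <= x <= 1 ->
  (exists p, In p (paper_partition n k) /\ in_open p x) \/
  (exists p, In p (paper_partition n k) /\ (x = fst p \/ x = snd p)).
Proof.
  intros Hn Hk H x Hx. facts n k Hn Hk H.
  pose proof (mem_P n k Hn Hk H) as M.
  unfold in_open.
  destruct (Rle_lt_dec x 0).
  { right. exists (0,k). split; [apply M; tauto|simpl; left; lra]. }
  destruct (Rlt_le_dec x k).
  { left. exists (0,k). split; [apply M; tauto|simpl; lra]. }
  destruct (Req_dec x k).
  { right. exists (0,k). split; [apply M; tauto|simpl; right; lra]. }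
  destruct (Rlt_le_dec x (wK k (n-1))).
  { left. exists (k, wK k (n-1)). split; [apply M; tauto|simpl; lra]. }
  destruct (Req_dec x (wK k (n-1))).
  { right. exists (k, wK k (n-1)). split; [apply M; tauto|simpl; right; lra]. }
  destruct (Rlt_le_dec x (1/2)).
  { left. exists (wK k (n-1), 1/2). split; [apply M; tauto|simpl; lra]. }
  destruct (Req_dec x (1/2)).
  { right. exists (wK k (n-1), 1/2). split; [apply M; tauto|simpl; right; lra]. }
  destruct (Rlt_le_dec x (1 - wK k (n-1))).
  { left. exists (1/2, 1 - wK k (n-1)). split; [apply M; tauto|simpl; lra]. }
  destruct (Rle_lt_dec x (1 - wK k 1)).
  { destruct (locate k (proj1 Hk) (n-1) ltac:(lia) (1-x) ltac:(lra))
      as [[i [Hi E]]|[i [Hi E]]].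
    - right. destruct (Nat.eq_dec i 1) as [->|Hi1].
      + exists (1 - wK k 1, 1). split; [apply M; tauto|simpl; left; lra].
      + exists (1 - wK k (i-1+1), 1 - wK k (i-1)). split.
        * apply M. right; right; right; right; right. exists (i-1)%nat. split; [lia|auto].
        * simpl; left. replace (i-1+1)%nat with i by lia. lra.
    - left. exists (1 - wK k (i+1), 1 - wK k i). split.
      * apply M. right; right; right; right; right. exists i. split; [lia|auto].
      * simpl; lra. }
  destruct (Rlt_le_dec x 1).
  { left. exists (1 - wK k 1, 1). split; [apply M; tauto|simpl; lra]. }
  right. exists (1 - wK k 1, 1). split; [apply M; tauto|simpl; right; lra].
Qed.

Lemma img_P n k : (2 <= n)%nat -> 0 < k < 1/2 -> (2+2*k)^n*k = 1 ->
  forall q, In q (paper_partition n k) -> exists a b,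
    isCut (paper_partition n k) a /\ isCut (paper_partition n k) b /\
    (forall y, in_open q y -> a < Ttilde k y < b) /\
    (forall x, a < x < b -> exists y, in_open q y /\ Ttilde k y = x).
Proof.
  intros Hn Hk H q Hq. facts n k Hn Hk H.
  pose proof (cut_P n k Hn Hk H) as C.
  assert (Es: sK k = 2*(1+k)) by reflexivity.
  set (s := sK k) in *.
  rewrite (mem_P n k Hn Hk H) in Hq. unfold in_open.
  destruct Hq as [Hq|[Hq|[Hq|[Hq|[Hq|[i [Hi Hq]]]]]]]; subst q; simpl.
  - exists (1 - wK k 1), 1. split; [apply C; right; right; right; right; right; exists 1%nat; split; [lia|auto]|].
    split; [apply C; tauto|]. split.
    + intros y Hy. rewrite Tt_left by lra. rewrite <- Es.
      assert (s*y < s*k) by nra.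
      rewrite Rabs_pos_eq by nra. nra.
    + intros x Hx. exists ((1-x)/s).
      assert (Hy: s * ((1-x)/s) = 1-x) by (field; lra).
      set (y := (1-x)/s) in *.
      assert (0 < y < k) by nra. split; [lra|].
      rewrite Tt_left by lra. rewrite <- Es, Hy. rewrite Rabs_pos_eq; lra.
  - exists 0, (1 - wK k 1). split; [apply C; tauto|].
    split; [apply C; right; right; right; right; right; exists 1%nat; split; [lia|auto]|]. split.
    + intros y Hy. rewrite Tt_left by lra. rewrite <- Es.
      assert (s*k < s*y < s * wK k (n-1)) by (split; nra).
      rewrite Rabs_pos_eq by nra. nra.
    + intros x Hx. exists ((1-x)/s).
      assert (Hy: s * ((1-x)/s) = 1-x) by (field; lra).
      set (y := (1-x)/s) in *.
      assert (k < y < wK k (n-1)) by nra. split; [lra|].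
      rewrite Tt_left by lra. rewrite <- Es, Hy. rewrite Rabs_pos_eq; lra.
  - exists 0, k. split; [apply C; tauto|]. split; [apply C; tauto|]. split.
    + intros y Hy. rewrite Tt_left by lra. rewrite <- Es.
      assert (s*wK k (n-1) < s*y < s * (1/2)) by (split; nra).
      rewrite Rabs_left by nra. rewrite Es in *. nra.
    + intros x Hx. exists ((1+x)/s).
      assert (Hy: s * ((1+x)/s) = 1+x) by (field; lra).
      set (y := (1+x)/s) in *.
      assert (wK k (n-1) < y < 1/2) by (rewrite Es in *; nra). split; [lra|].
      rewrite Tt_left by lra. rewrite <- Es, Hy. rewrite Rabs_left; lra.
  - exists 0, k. split; [apply C; tauto|]. split; [apply C; tauto|]. split.
    + intros y Hy. rewrite Tt_right by lra. rewrite <- Es.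
      assert (s*wK k (n-1) < s*(1-y) < s * (1/2)) by (split; nra).
      rewrite Rabs_left by nra. rewrite Es in *. nra.
    + intros x Hx. exists (1 - (1+x)/s).
      assert (Hy: s * (1 - (1 - (1+x)/s)) = 1+x) by (field; lra).
      set (y := 1 - (1+x)/s) in *.
      assert (wK k (n-1) < 1 - y < 1/2) by (rewrite Es in *; nra). split; [lra|].
      rewrite Tt_right by lra. rewrite <- Es, Hy. rewrite Rabs_left; lra.
  - pose proof (w_le k 2 n (proj1 Hk) ltac:(lia)) as W2.
    rewrite wS in W2. fold s in W2.
    exists (1 - s * wK k 1), 1. split.
    { apply C. right; right; right; right; right. exists 2%nat. split; [lia|]. rewrite (wS k 1). reflexivity. }
    split; [apply C; tauto|]. split.
    + intros y Hy. rewrite Tt_right by lra. rewrite <- Es.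
      assert (0 < s*(1-y) < s * wK k 1) by (split; nra).
      rewrite Rabs_pos_eq by nra. nra.
    + intros x Hx. exists (1 - (1-x)/s).
      assert (Hy: s * (1 - (1 - (1-x)/s)) = 1-x) by (field; lra).
      set (y := 1 - (1-x)/s) in *.
      assert (0 < 1 - y < wK k 1) by nra. split; [lra|].
      rewrite Tt_right by lra. rewrite <- Es, Hy. rewrite Rabs_pos_eq; lra.
  - pose proof (w_le k (i+2) n (proj1 Hk) ltac:(lia)) as W2.
    pose proof (w_le k (i+1) (n-1) (proj1 Hk) ltac:(lia)) as W3.
    pose proof (w_pos k i (proj1 Hk)) as W4.
    replace (i+2)%nat with (S (i+1)) in W2 by lia. rewrite wS in W2. fold s in W2.
    assert (E1: wK k (i+1) = s * wK k i) by (replace (i+1)%nat with (S i) by lia; apply wS).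
    exists (1 - s * wK k (i+1)), (1 - wK k (i+1)). split.
    { apply C. right; right; right; right; right. exists (S (i+1)). split; [lia|]. rewrite (wS k (i+1)). reflexivity. }
    split.
    { apply C. right; right; right; right; right. exists (i+1)%nat. split; [lia|auto]. }
    split.
    + intros y Hy. rewrite Tt_right by lra. rewrite <- Es.
      assert (s * wK k i < s*(1-y) < s * wK k (i+1)) by (split; nra).
      rewrite Rabs_pos_eq by nra. nra.
    + intros x Hx. exists (1 - (1-x)/s).
      assert (Hy: s * (1 - (1 - (1-x)/s)) = 1-x) by (field; lra).
      set (y := 1 - (1-x)/s) in *.
      assert (wK k i < 1 - y < wK k (i+1)) by nra. split; [lra|].
      rewrite Tt_right by lra. rewrite <- Es, Hy. rewrite Rabs_pos_eq; lra.
Qed.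

Lemma case1 k : 0 < k < 1/2 -> (2+2*k)^1*k = 1 ->
  markov_partition 0 1 (Ttilde k) (paper_partition 1 k).
Proof.
  intros Hk H. simpl in H.
  assert (Hs: 2*(1+k)*k = 1) by lra.
  unfold paper_partition. simpl.
  set (P := [(0, k); (k, 1 / 2); (1 / 2, 1 - k); (1 - k, 1)]).
  assert (M: forall p, In p P <-> p = (0,k) \/ p = (k,1/2) \/ p = (1/2,1-k) \/ p = (1-k,1)).
  { intros p. unfold P. simpl. split; intros HH; repeat destruct HH as [HH|HH]; subst; tauto. }
  assert (C: forall c, c = 0 \/ c = k \/ c = 1/2 \/ c = 1-k \/ c = 1 -> isCut P c).
  { intros c Hc q Hq. rewrite M in Hq.
    repeat destruct Hq as [Hq|Hq]; subst; simpl; repeat destruct Hc as [Hc|Hc]; subst; lra. }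
  apply markov_generic.
  - unfold P. repeat constructor; simpl; intros HH; repeat destruct HH as [HH|HH]; try exact HH;
      injection HH; intros; lra.
  - intros p Hp. rewrite M in Hp. repeat destruct Hp as [Hp|Hp]; subst; simpl; lra.
  - intros p Hp. rewrite M in Hp. repeat destruct Hp as [Hp|Hp]; subst; simpl; split; apply C; tauto.
  - intros x Hx. unfold in_open.
    destruct (Rle_lt_dec x 0).
    { right. exists (0,k). split; [apply M; tauto|simpl; left; lra]. }
    destruct (Rlt_le_dec x k).
    { left. exists (0,k). split; [apply M; tauto|simpl; lra]. }
    destruct (Req_dec x k).
    { right. exists (0,k). split; [apply M; tauto|simpl; right; lra]. }
    destruct (Rlt_le_dec x (1/2)).
    { left. exists (k,1/2). split; [apply M; tauto|simpl; lra]. }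
    destruct (Req_dec x (1/2)).
    { right. exists (k,1/2). split; [apply M; tauto|simpl; right; lra]. }
    destruct (Rlt_le_dec x (1-k)).
    { left. exists (1/2,1-k). split; [apply M; tauto|simpl; lra]. }
    destruct (Req_dec x (1-k)).
    { right. exists (1/2,1-k). split; [apply M; tauto|simpl; right; lra]. }
    destruct (Rlt_le_dec x 1).
    { left. exists (1-k,1). split; [apply M; tauto|simpl; lra]. }
    right. exists (1-k,1). split; [apply M; tauto|simpl; right; lra].
  - intros q Hq. rewrite M in Hq. unfold in_open.
    set (s := 2*(1+k)) in *.
    assert (S2: 2 < s) by (unfold s; lra).
    destruct Hq as [Hq|[Hq|[Hq|Hq]]]; subst q; simpl.
    + exists 0, 1. split; [apply C; tauto|]. split; [apply C; tauto|]. split.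
      * intros y Hy. rewrite Tt_left by lra. fold s.
        rewrite Rabs_pos_eq by nra. nra.
      * intros x Hx. exists ((1-x)/s).
        assert (Hy: s * ((1-x)/s) = 1-x) by (field; lra).
        set (y := (1-x)/s) in *.
        assert (0 < y < k) by nra. split; [lra|].
        rewrite Tt_left by lra. fold s. rewrite Hy. rewrite Rabs_pos_eq; lra.
    + exists 0, k. split; [apply C; tauto|]. split; [apply C; tauto|]. split.
      * intros y Hy. rewrite Tt_left by lra. fold s.
        rewrite Rabs_left by nra. unfold s in *. nra.
      * intros x Hx. exists ((1+x)/s).
        assert (Hy: s * ((1+x)/s) = 1+x) by (field; lra).
        set (y := (1+x)/s) in *.
        assert (k < y < 1/2) by (unfold s in *; nra). split; [lra|].
        rewrite Tt_left by lra. fold s. rewrite Hy. rewrite Rabs_left; lra.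
    + exists 0, k. split; [apply C; tauto|]. split; [apply C; tauto|]. split.
      * intros y Hy. rewrite Tt_right by lra. fold s.
        rewrite Rabs_left by nra. unfold s in *. nra.
      * intros x Hx. exists (1 - (1+x)/s).
        assert (Hy: s * (1 - (1 - (1+x)/s)) = 1+x) by (field; lra).
        set (y := 1 - (1+x)/s) in *.
        assert (k < 1 - y < 1/2) by (unfold s in *; nra). split; [lra|].
        rewrite Tt_right by lra. fold s. rewrite Hy. rewrite Rabs_left; lra.
    + exists 0, 1. split; [apply C; tauto|]. split; [apply C; tauto|]. split.
      * intros y Hy. rewrite Tt_right by lra. fold s.
        rewrite Rabs_pos_eq by nra. nra.
      * intros x Hx. exists (1 - (1-x)/s).
        assert (Hy: s * (1 - (1 - (1-x)/s)) = 1-x) by (field; lra).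
        set (y := 1 - (1-x)/s) in *.
        assert (0 < 1 - y < k) by nra. split; [lra|].
        rewrite Tt_right by lra. fold s. rewrite Hy. rewrite Rabs_pos_eq; lra.
Qed.

Theorem lemma15 :
  forall (n : nat), (1 <= n)%nat ->
  forall (k : R), 0 < k < 1/2 -> (2 + 2*k)^n * k = 1 ->
    is_markov 0 1 (Ttilde k) /\
    markov_partition 0 1 (Ttilde k) (paper_partition n k) /\
    length (paper_partition n k) = (n + 3)%nat.
Proof.
  intros n Hn k Hk H.
  assert (MP: markov_partition 0 1 (Ttilde k) (paper_partition n k)).
  { destruct (Nat.eq_dec n 1) as [->|Hn1]; [apply case1; auto|].
    apply markov_generic.
    - apply nodup_P; auto; lia.
    - apply bounds_P; auto; lia.
    - apply ends_cut; auto; lia.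
    - apply cover_P; auto; lia.
    - apply img_P; auto; lia. }
  split; [exists (paper_partition n k); exact MP|]. split; [exact MP|].
  destruct (Nat.eq_dec n 1) as [->|Hn1]; [reflexivity|].
  unfold paper_partition. cbv zeta.
  replace (Nat.eqb n 1) with false by (symmetry; apply Nat.eqb_neq; lia).
  rewrite !length_app, length_map, length_seq. simpl. lia.
Qed.
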